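(* Let $\rho$ be a density operator on a $D$-dimensional Hilbert space with eigenvalues $\lambda_1,\dots,\lambda_D$ (with multiplicity), and let $0<\epsilon<1$. Let $x$ be the unique number $\ge\min_i\lambda_i$ with $\sum_i(x-\lambda_i)^+=\epsilon$ and $y$ the unique number with $\sum_i(\lambda_i-y)^+=\epsilon$, where $t^+=\max(t,0)$, and assume $x\le y$. Set $\mu_i=\min(\max(\lambda_i,x),y)$, i.e. eigenvalues below $x$ are raised to $x$, those above $y$ are lowered to $y$, and the others are unchanged. Then $$\inf_{\sigma\in\mathcal B^\epsilon(\rho)}\mathrm{tr}\,\sigma^2=\sum_{i=1}^D\mu_i^2,\qquad\text{so}\qquad S_2^\epsilon(\rho)=-\log_2\sum_{i=1}^D\mu_i^2 .$$ (In the paper this is applied to $\rho_{\vec XE}$, with $D=d^{3n}$ and the spectrum consisting of $0$ with multiplicity $d^{3n}-d^{2n}$ and $(\beta_0/d)^l(\beta_1/d)^{n-l}$ with multiplicity $d^n\binom nl(d-1)^{n-l}$, $0\le l\le n$.)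
   Context: Trace distance $\|\rho-\sigma\|=\frac12\mathrm{tr}|\rho-\sigma|$; $\mathcal B^\epsilon(\rho)$ is the set of density operators $\sigma$ on the same space with $\|\rho-\sigma\|\le\epsilon$. The $\epsilon$-smooth Rényi entropy of order $2$ is $S_2^\epsilon(\rho)=-\log_2\inf_{\sigma\in\mathcal B^\epsilon(\rho)}\mathrm{tr}\,\sigma^2$. *)

(* Defs.v *)
From HB Require Import structures.
From mathcomp Require Import all_boot all_order all_algebra.
From mathcomp Require Import sesquilinear spectral.
From mathcomp Require Import complex.
From mathcomp Require Import classical_sets reals exp.

Set Implicit Arguments.
Unset Strict Implicit.
Unset Printing Implicit Defensive.

Import Order.TTheory GRing.Theory Num.Theory.
Local Open Scope ring_scope.
Local Open Scope sesquilinear_scope.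
Local Open Scope classical_set_scope.

(* Positive semidefinite: <v| A |v> >= 0 for every vector (row-vector
   convention: v A v^dagger), where 0 <= z in C means z is a nonnegative real. *)
Definition psdmx {K : numClosedFieldType} n (A : 'M[K]_n) : Prop :=
  forall v : 'rV[K]_n, 0 <= (v *m A *m v ^t*) 0 0.

Definition density {K : numClosedFieldType} n (A : 'M[K]_n) : Prop :=
  [/\ A ^t* = A, psdmx A & \tr A = 1].

(* tr |A| with |A| = sqrt(A^* A): the sum of the square roots of the
   eigenvalues (with multiplicity) of the PSD matrix A^* A. *)
Definition trnorm {K : numClosedFieldType} n (A : 'M[K]_n) : K :=
  \sum_(i < n) sqrtC (spectral_diag (A ^t* *m A) 0 i).

Definition tdist {K : numClosedFieldType} n (rho sigma : 'M[K]_n) : K :=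
  trnorm (rho - sigma) / 2%:R.

Definition eps_ball {R : rcfType} n (eps : R) (rho : 'M[R[i]]_n)
  : set 'M[R[i]]_n :=
  [set sigma | density sigma /\ tdist rho sigma <= (eps%:C)%C].

(* The set { tr sigma^2 : sigma in B^eps(rho) } (tr sigma^2 is real for a
   Hermitian sigma; we take its real part to land in R). *)
Definition tr2_set {R : rcfType} n (eps : R) (rho : 'M[R[i]]_n) : set R :=
  [set complex.Re (\tr (sigma *m sigma)) | sigma in eps_ball eps rho].

Definition log2 {R : realType} (t : R) : R := ln t / ln 2.

Definition S2eps {R : realType} n (eps : R) (rho : 'M[R[i]]_n) : R :=
  - log2 (inf (tr2_set eps rho)).

(* Main.v *)
Require Import Defs.
From HB Require Import structures.
From mathcomp Require Import all_boot all_order all_algebra.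
From mathcomp Require Import sesquilinear spectral.
From mathcomp Require Import complex.
From mathcomp Require Import classical_sets reals exp.
From mathcomp Require Import ring lra.
Import Order.TTheory GRing.Theory Num.Theory.
Local Open Scope ring_scope.

Section Helpers.
Local Set Implicit Arguments.
Local Unset Strict Implicit.
Local Unset Printing Implicit Defensive.
Local Open Scope sesquilinear_scope.

Section Gen.
Variable C : numClosedFieldType.

Lemma char_conj n (U P A : 'M[C]_n) : U *m P = 1%:M ->
  char_poly (U *m A *m P) = char_poly A.
Proof.
move=> UP; rewrite /char_poly /char_poly_mx.
have XE : ('X%:M : 'M[{poly C}]_n) = map_mx polyC U *m 'X%:M *m map_mx polyC P.
  by rewrite mul_mx_scalar -scalemxAl -map_mxM UP map_mx1 scalemx1.
rewrite {1}XE !map_mxM -mulmxBl -mulmxBr !det_mulmx mulrC mulrA -det_mulmx -map_mxM.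
by rewrite (mulmx1C UP) map_mx1 det1 mul1r.
Qed.

Lemma char_diag n (d : 'rV[C]_n) :
  char_poly (diag_mx d) = \prod_(i < n) ('X - (d 0 i)%:P).
Proof. by rewrite char_poly_trig //; apply: eq_bigr => i _; rewrite mxE eqxx mulr1n. Qed.

Lemma perm_sum n (a b : 'I_n -> C) :
  \prod_(i < n) ('X - (a i)%:P) = \prod_(i < n) ('X - (b i)%:P) ->
  forall (T : nmodType) (f : C -> T), \sum_(i < n) f (a i) = \sum_(i < n) f (b i).
Proof.
move=> E T f.
have: perm_eq [seq a i | i <- enum 'I_n] [seq b i | i <- enum 'I_n].
  apply: prod_XsubC_eq; rewrite !big_map; exact: E.
move=> H; have := perm_big (x:=0) (op:=+%R) _ H (P:=xpredT) (F:=f).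
by rewrite !big_map; apply.
Qed.

Lemma unit_tP n (P : 'M[C]_n) : P \is unitarymx -> P^t* *m P = 1%:M.
Proof. by move/unitarymxP; exact: mulmx1C. Qed.

Lemma herm_spec n (A : 'M[C]_n) : A^t* = A ->
  A = (spectralmx A)^t* *m diag_mx (spectral_diag A) *m spectralmx A.
Proof.
move=> h; have nA : A \is normalmx by apply/normalmxP; rewrite h.
have /orthomx_spectralP E := nA.
by rewrite -invmx_unitary ?spectral_unitarymx.
Qed.

Lemma ucM n (P D1 D2 : 'M[C]_n) : P \is unitarymx ->
  (P^t* *m D1 *m P) *m (P^t* *m D2 *m P) = P^t* *m (D1 *m D2) *m P.
Proof. by move=> U; rewrite !mulmxA mulmxtVK. Qed.

Lemma ucB n (P D1 D2 : 'M[C]_n) :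
  (P^t* *m D1 *m P) - (P^t* *m D2 *m P) = P^t* *m (D1 - D2) *m P.
Proof. by rewrite mulmxBr mulmxBl. Qed.

Lemma uc_adj n (P : 'M[C]_n) d :
  (P^t* *m diag_mx d *m P)^t* = P^t* *m diag_mx (map_mx Num.conj d) *m P.
Proof. by rewrite !trmx_mul !map_mxM trmxCK tr_diag_mx map_diag_mx mulmxA. Qed.

Lemma adj_herm m n (A : 'M[C]_(m, n)) : (A^t* *m A)^t* = A^t* *m A.
Proof. by rewrite trmx_mul map_mxM trmxCK. Qed.

Lemma uc_tr n (P D : 'M[C]_n) : P \is unitarymx -> \tr (P^t* *m D *m P) = \tr D.
Proof. by move=> U; rewrite mxtrace_mulC mulmxA (unitarymxP U) mul1mx. Qed.

Lemma uc_char n (P D : 'M[C]_n) : P \is unitarymx ->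
  char_poly (P^t* *m D *m P) = char_poly D.
Proof. by move=> U; apply: char_conj; apply: unit_tP. Qed.

Lemma herm_char n (A : 'M[C]_n) : A^t* = A ->
  char_poly A = \prod_(i < n) ('X - (spectral_diag A 0 i)%:P).
Proof.
move=> h; rewrite {1}(herm_spec h) uc_char ?spectral_unitarymx //.
exact: char_diag.
Qed.
End Gen.

Section Gen2.
Variable C : numClosedFieldType.

Lemma trnorm_uc n (Q : 'M[C]_n) d : Q \is unitarymx ->
  trnorm (Q^t* *m diag_mx d *m Q) = \sum_(i < n) `|d 0 i|.
Proof.
move=> U; set A := _ *m Q.
have S : A^t* *m A = Q^t* *m diag_mx (\row_i ((d 0 i)^* * d 0 i)) *m Q.
  by rewrite uc_adj ucM // mulmx_diag; congr (_ *m diag_mx _ *m _); apply/rowP => i; rewrite !mxE.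
have E1 := herm_char (adj_herm A).
rewrite S uc_char // char_diag in E1.
rewrite /trnorm S.
have := perm_sum E1 sqrtC => <-.
by apply: eq_bigr => i _; rewrite mxE normC_def mulrC.
Qed.

Lemma trK_bound n (Q P : 'M[C]_n) (dl ka : 'rV[C]_n) (c : C) :
  Q \is unitarymx -> P \is unitarymx -> (forall k, `|ka 0 k| <= c) ->
  `|\tr ((Q^t* *m diag_mx dl *m Q) *m (P^t* *m diag_mx ka *m P))|
    <= c * \sum_(j < n) `|dl 0 j|.
Proof.
move=> UQ UP hk.
set W := Q *m P^t*.
have UW : W \is unitarymx by rewrite mul_unitarymx // trmxC_unitary.
have WW : W^t* = P *m Q^t* by rewrite /W trmx_mul map_mxM trmxCK.
have trE : \tr ((Q^t* *m diag_mx dl *m Q) *m (P^t* *m diag_mx ka *m P))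
    = \tr (diag_mx dl *m (W *m diag_mx ka *m W^t*)).
  by rewrite -!mulmxA mxtrace_mulC WW /W !mulmxA.
have Wsum j : \sum_(k < n) W j k * (W j k)^* = 1.
  have := congr1 (fun M : 'M[C]_n => M j j) (unitarymxP UW); rewrite !mxE eqxx /= => E.
  by rewrite -[RHS]E; apply: eq_bigr => k _; rewrite !mxE.
rewrite trE /mxtrace mul_diag_mx; clearbody W.
under eq_bigr do rewrite mxE.
rewrite mulr_sumr; apply: le_trans (ler_norm_sum _ _ _) _.
apply: ler_sum => j _; rewrite normrM mulrC ler_wpM2r //.
rewrite mul_mx_diag mxE; under eq_bigr do rewrite !mxE.
apply: le_trans (ler_norm_sum _ _ _) _.
rewrite -[c]mulr1 -(Wsum j) mulr_sumr; apply: ler_sum => k _.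
rewrite !normrM norm_conjC mulrAC -expr2 normCK mulrC.
by rewrite ler_wpM2r // mul_conjC_ge0.
Qed.

Lemma uc_psd n (P : 'M[C]_n) (mu : 'rV[C]_n) : (forall k, 0 <= mu 0 k) ->
  psdmx (P^t* *m diag_mx mu *m P).
Proof.
move=> hm v.
have -> : v *m (P^t* *m diag_mx mu *m P) *m v^t*
   = (v *m P^t*) *m diag_mx mu *m (v *m P^t*)^t*.
  by rewrite trmx_mul map_mxM trmxCK !mulmxA.
rewrite mul_mx_diag !mxE; apply: sumr_ge0 => k _; rewrite !mxE.
by rewrite mulrAC mulr_ge0 // mul_conjC_ge0.
Qed.

Lemma trHH_ge0 n (H : 'M[C]_n) : H^t* = H -> 0 <= \tr (H *m H).
Proof.
move=> h; rewrite /mxtrace; apply: sumr_ge0 => i _; rewrite mxE.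
apply: sumr_ge0 => j _.
have -> : H j i = (H i j)^* by rewrite -{1}h !mxE.
exact: mul_conjC_ge0.
Qed.
End Gen2.

Lemma psd_diag (C : numClosedFieldType) n (P : 'M[C]_n) (d : 'rV[C]_n) :
  P \is unitarymx -> psdmx (P^t* *m diag_mx d *m P) -> forall i, 0 <= d 0 i.
Proof.
move=> U ps i; have := ps ('e_i *m P).
rewrite trmx_mul map_mxM !mulmxA !mulmxtVK // mul_mx_diag mxE.
rewrite (bigD1 i) //= big1 ?addr0.
  by rewrite !mxE !eqxx /= mul1r conjC1 mulr1.
by move=> k hk; rewrite !mxE (negPf hk) andbF /= !mul0r.
Qed.

Lemma tr_real (C : numClosedFieldType) n (A B : 'M[C]_n) :
  A^t* = A -> B^t* = B -> \tr (A *m B) \is Num.real.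
Proof.
move=> hA hB; rewrite CrealE; apply/eqP.
have E : \tr ((A *m B)^t*) = (\tr (A *m B))^*.
  by rewrite /mxtrace rmorph_sum; apply: eq_bigr => i _; rewrite !mxE.
by rewrite -E trmx_mul map_mxM hA hB mxtrace_mulC.
Qed.

Section Conc.
Variable R : rcfType.
Local Notation C := R[i].

Lemma normC_real (r : R) : `|(r%:C)%C| = ((`|r|)%:C)%C :> C.
Proof. by rewrite normc_def /= expr0n /= addr0 sqrtr_sqr. Qed.

Lemma realC (r : R) : (r%:C)%C \is @Num.real C.
Proof. by apply/complex_realP; exists r. Qed.

Definition clamp (x y r : R) := Num.min (Num.max r x) y.

Lemma clamp_id x y r : x <= y ->
  clamp x y r = r + Num.max (x - r) 0 - Num.max (r - y) 0.
Proof.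
move=> xy; rewrite /clamp !maxEle !minEle.
repeat case: ifP; move=> *; lra.
Qed.
Lemma clamp_abs x y r : x <= y ->
  `|r - clamp x y r| = Num.max (x - r) 0 + Num.max (r - y) 0.
Proof.
move=> xy; have [h|h] := lerP 0 (r - clamp x y r).
  rewrite (ger0_norm h); move: h; rewrite /clamp !maxEle !minEle.
  by repeat case: ifP; move=> *; lra.
rewrite (ltr0_norm h); move: h; rewrite /clamp !maxEle !minEle.
by repeat case: ifP; move=> *; lra.
Qed.

Lemma clamp_cases x y r : x <= y ->
  [\/ [/\ r <= x, clamp x y r = x, Num.max (x - r) 0 = x - r & Num.max (r - y) 0 = 0],
      [/\ x <= r, clamp x y r = r, Num.max (x - r) 0 = 0 & Num.max (r - y) 0 = 0]
    | [/\ y <= r, clamp x y r = y, Num.max (x - r) 0 = 0 & Num.max (r - y) 0 = r - y]].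
Proof.
move=> xy; rewrite /clamp !maxEle !minEle.
case: (lerP r x) => h1; [apply: Or31|case: (lerP r y) => h2; [apply: Or32|apply: Or33]];
  split; repeat case: ifP; move=> *; lra.
Qed.

Lemma clamp_prod x y r : x <= y ->
  r * clamp x y r = clamp x y r ^+ 2 - x * Num.max (x - r) 0 + y * Num.max (r - y) 0.
Proof.
move=> xy; case: (clamp_cases r xy) => [[_ -> -> ->]|[_ -> -> ->]|[_ -> -> ->]]; ring.
Qed.

Lemma clamp_ge x y r : x <= y -> x <= clamp x y r.
Proof. move=> xy; rewrite /clamp !maxEle !minEle; repeat case: ifP; move=> *; lra. Qed.

Lemma clamp_le x y r : x <= y -> clamp x y r <= y.
Proof. move=> xy; rewrite /clamp !maxEle !minEle; repeat case: ifP; move=> *; lra. Qed.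

Lemma herm_sub n (A B : 'M[C]_n) : A^t* = A -> B^t* = B -> (A - B)^t* = A - B.
Proof. by move=> hA hB; rewrite linearB /= map_mxB hA hB. Qed.

Lemma uc_herm n (P : 'M[C]_n) (f : 'I_n -> R) :
  (P^t* *m diag_mx (\row_i ((f i)%:C)%C) *m P)^t* = P^t* *m diag_mx (\row_i ((f i)%:C)%C) *m P.
Proof.
rewrite uc_adj; congr (_ *m diag_mx _ *m _); apply/rowP => i.
by rewrite !mxE conj_Creal // realC.
Qed.

Lemma uc_tr_diag n (P : 'M[C]_n) (f g : 'I_n -> R) : P \is unitarymx ->
  \tr ((P^t* *m diag_mx (\row_i ((f i)%:C)%C) *m P) *m (P^t* *m diag_mx (\row_i ((g i)%:C)%C) *m P))
  = ((\sum_i f i * g i)%:C)%C.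
Proof.
move=> UP; rewrite ucM // mulmx_diag uc_tr // mxtrace_diag rmorph_sum.
by apply: eq_bigr => i _; rewrite !mxE rmorphM.
Qed.

Lemma lower n (rho sigma P : 'M[C]_n) (r : 'I_n -> R) (x y eps : R) :
  P \is unitarymx ->
  rho = P^t* *m diag_mx (\row_i ((r i)%:C)%C) *m P ->
  density rho -> density sigma ->
  tdist rho sigma <= (eps%:C)%C ->
  x <= y ->
  \sum_i r i * clamp x y (r i) = \sum_i clamp x y (r i) ^+ 2 + (y - x) * eps ->
  (((\sum_i clamp x y (r i) ^+ 2)%:C)%C : C) <= \tr (sigma *m sigma).
Proof.
move=> UP Erho [hr psr tr1] [hs pss ts1] td xy Hid.
pose h := (x + y) / 2.
have hs0 := uc_herm P (fun i => clamp x y (r i)).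
have hK := uc_herm P (fun i => clamp x y (r i) - h).
have T3 : \tr (rho *m (P^t* *m diag_mx (\row_i ((clamp x y (r i))%:C)%C) *m P))
   = ((\sum_i r i * clamp x y (r i))%:C)%C by rewrite Erho uc_tr_diag.
have T4 : \tr ((P^t* *m diag_mx (\row_i ((clamp x y (r i))%:C)%C) *m P) *m
                (P^t* *m diag_mx (\row_i ((clamp x y (r i))%:C)%C) *m P))
   = ((\sum_i clamp x y (r i) ^+ 2)%:C)%C.
  by rewrite uc_tr_diag //; congr ((_)%:C)%C; apply: eq_bigr => i _; rewrite expr2.
have s0K : P^t* *m diag_mx (\row_i ((clamp x y (r i))%:C)%C) *m P
    = P^t* *m diag_mx (\row_i ((clamp x y (r i) - h)%:C)%C) *m P + ((h%:C)%C)%:M.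
  have -> : \row_i ((clamp x y (r i))%:C)%C =
     \row_i ((clamp x y (r i) - h)%:C)%C + const_mx ((h%:C)%C).
    by apply/rowP => i; rewrite !mxE rmorphB /= subrK.
  rewrite raddfD /= diag_const_mx mulmxDr mulmxDl; congr (_ + _).
  by rewrite mul_mx_scalar -scalemxAl unit_tP // scalemx1.
have Kb k : `|(\row_i ((clamp x y (r i) - h)%:C)%C) 0 k| <= (((y - x) / 2)%:C)%C.
  rewrite mxE normC_real lecR ler_norml.
  have := clamp_ge (r k) xy; have := clamp_le (r k) xy; rewrite /h; lra.
move: hs0 T3 T4 s0K.
move: (P^t* *m diag_mx (\row_i ((clamp x y (r i))%:C)%C) *m P) => s0 hs0 T3 T4 s0K.
move DlE : (rho - sigma) => Dl.
have hD : Dl^t* = Dl by rewrite -DlE; apply: herm_sub.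
have trD : \tr Dl = 0 by rewrite -DlE linearB /= tr1 ts1 subrr.
have T2 : \tr (sigma *m s0) = \tr (rho *m s0) - \tr (Dl *m s0).
  by rewrite -DlE mulmxBl linearB /= opprB addrC subrK.
have ED := herm_spec hD.
move: (spectral_unitarymx Dl) ED.
move: (spectralmx Dl) (spectral_diag Dl) => Q dl UQ ED.
have tdle : \sum_j `|dl 0 j| <= ((2 * eps)%:C)%C.
  move: td; rewrite /tdist DlE ED trnorm_uc // ler_pdivrMr ?ltr0n //.
  by rewrite mulrC rmorphM rmorph_nat.
have bound := trK_bound dl UQ UP Kb.
rewrite -ED in bound.
move: hK Kb bound s0K.
move: (P^t* *m diag_mx (\row_i ((clamp x y (r i) - h)%:C)%C) *m P) => K hK _ bound s0K.
have T2a : \tr (Dl *m s0) = \tr (Dl *m K).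
  by rewrite s0K mulmxDr linearD /= mul_mx_scalar mxtraceZ trD mulr0 addr0.
have trreal : \tr (Dl *m K) \is Num.real by apply: tr_real.
have BE : \tr (Dl *m K) <= (((y - x) * eps)%:C)%C.
  apply: le_trans (real_ler_norm trreal) _; apply: le_trans bound _.
  have -> : (y - x) * eps = (y - x) / 2 * (2 * eps) by field.
  apply: le_trans (ler_wpM2l _ tdle) _; first by rewrite ler0c; lra.
  by rewrite -rmorphM.
have T1 : \tr (sigma *m sigma) = \tr ((sigma - s0) *m (sigma - s0))
    + 2%:R * \tr (sigma *m s0) - \tr (s0 *m s0).
  rewrite mulmxBl !mulmxBr !linearB /= [\tr (s0 *m sigma)]mxtrace_mulC.
  move: (\tr (sigma *m sigma)) (\tr (sigma *m s0)) (\tr (s0 *m s0)) => a b c; ring.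
have A0 : 0 <= \tr ((sigma - s0) *m (sigma - s0)) by apply: trHH_ge0; apply: herm_sub.
rewrite -subr_ge0 T1 T2 T2a T3 T4 Hid rmorphD /=.
move: A0 BE; move: (\tr ((sigma - s0) *m (sigma - s0))) (\tr (Dl *m K)) => A B A0 BE.
move: BE; move: ((\sum_i clamp x y (r i) ^+ 2)%:C)%C (((y - x) * eps)%:C)%C => S E BE.
have -> : A + 2%:R * (S + E - B) - S - S = A + 2%:R * (E - B) by ring.
by rewrite addr_ge0 // mulr_ge0 // subr_ge0.
Qed.

End Conc.

End Helpers.

Theorem mainTheorem3 (R : realType) (D : nat) (rho : 'M[R[i]]_D)
    (lam : 'I_D -> R) (eps x y : R) :
  density rho ->
  char_poly rho = \prod_(i < D) ('X - ((lam i)%:C)%C%:P) ->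
  0 < eps < 1 ->
  (exists i, lam i <= x) ->
  \sum_(i < D) Num.max (x - lam i) 0 = eps ->
  \sum_(i < D) Num.max (lam i - y) 0 = eps ->
  x <= y ->
  inf (tr2_set eps rho)
    = \sum_(i < D) (Num.min (Num.max (lam i) x) y) ^+ 2 /\
  S2eps eps rho
    = - log2 (\sum_(i < D) (Num.min (Num.max (lam i) x) y) ^+ 2).
Proof.
move=> hrho hchar /andP[eps0 eps1] _ hX hY xy.
have [hr psr tr1] := hrho.
have UP : spectralmx rho \is unitarymx by apply: spectral_unitarymx.
have Erho0 := herm_spec hr.
have charE := herm_char hr.
have permE : \prod_(i < D) ('X - (spectral_diag rho 0 i)%:P)
     = \prod_(i < D) ('X - ((lam i)%:C)%C%:P).
  by rewrite -charE hchar.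
move: UP Erho0 permE; move: (spectralmx rho) (spectral_diag rho) => P d UP Erho0 permE.
pose r := fun i => complex.Re (d 0 i).
have sumR (g : R -> R) : \sum_i g (r i) = \sum_i g (lam i).
  exact: (perm_sum permE (fun z => g (complex.Re z))).
have Im0 i : complex.Im (d 0 i) = 0.
  have E := perm_sum permE (fun z => complex.Im z ^+ 2).
  have H0 : \sum_(i < D) complex.Im (d 0 i) ^+ 2 = 0.
    by rewrite E big1 // => j _; rewrite /= expr2 mul0r.
  have h : complex.Im (d 0 i) ^+ 2 <= 0.
    rewrite -H0 (bigD1 i) //= lerDl sumr_ge0 // => j _; exact: sqr_ge0.
  by apply/eqP; rewrite -sqrf_eq0 eq_le h sqr_ge0.
have dE : d = \row_i ((r i)%:C)%C.
  by apply/rowP => i; rewrite mxE [LHS]complexE Im0 /r mulr0 addr0.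
have Erho : rho = (P^t* *m diag_mx (\row_i ((r i)%:C)%C) *m P)%sesqui by rewrite -dE.
have rnn i : 0 <= r i.
  have := psd_diag UP (eq_ind _ (fun M => psdmx M) psr _ Erho) i.
  by rewrite mxE ler0c.
clearbody r; clear Erho0 dE Im0 permE charE.
have x0 : 0 <= x.
  rewrite leNgt; apply/negP => hx.
  have : \sum_i Num.max (x - r i) 0 = 0.
    apply: big1 => i _; have hle : x - r i <= 0 by have := rnn i; lra.
    by rewrite maxEle hle.
  rewrite (sumR (fun t => Num.max (x - t) 0)) hX => e0; by rewrite e0 ltxx in eps0.
have hXr : \sum_i Num.max (x - r i) 0 = eps by rewrite (sumR (fun t => Num.max (x - t) 0)).
have hYr : \sum_i Num.max (r i - y) 0 = eps by rewrite (sumR (fun t => Num.max (t - y) 0)).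
have sum_r : \sum_i r i = 1.
  have : \tr rho = ((\sum_i r i)%:C)%C.
    rewrite Erho uc_tr // mxtrace_diag rmorph_sum.
    by apply: eq_bigr => i _; rewrite mxE.
  by rewrite tr1 => /(congr1 (@complex.Re R)) /= ->.
have Hid : \sum_i r i * clamp x y (r i) = \sum_i clamp x y (r i) ^+ 2 + (y - x) * eps.
  under eq_bigr do rewrite clamp_prod //.
  rewrite big_split big_split /= sumrN -!mulr_sumr hXr hYr; ring.
have sum_cl : \sum_i clamp x y (r i) = 1.
  under eq_bigr do rewrite clamp_id //.
  rewrite big_split big_split /= sumrN hXr hYr sum_r; ring.
have sum_abs : \sum_i `|r i - clamp x y (r i)| = 2 * eps.
  under eq_bigr do rewrite clamp_abs //.
  rewrite big_split /= hXr hYr; ring.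
have sumT : \sum_i clamp x y (r i) ^+ 2 = \sum_i (Num.min (Num.max (lam i) x) y) ^+ 2.
  exact: (sumR (fun t => clamp x y t ^+ 2)).
set s0 := (P^t* *m diag_mx (\row_i ((clamp x y (r i))%:C)%C) *m P)%sesqui.
have s0ball : eps_ball eps rho s0.
  split; first split.
  - exact: uc_herm.
  - apply: uc_psd => k; rewrite mxE ler0c; exact: le_trans x0 (clamp_ge _ xy).
  - rewrite uc_tr // mxtrace_diag.
    under eq_bigr do rewrite mxE.
    by rewrite -rmorph_sum sum_cl.
  - rewrite /tdist Erho ucB -linearB /= trnorm_uc //.
    under eq_bigr do rewrite !mxE -rmorphB normC_real.
    rewrite -rmorph_sum sum_abs rmorphM rmorph_nat [2%:R * _]mulrC mulfK //.
    by rewrite pnatr_eq0.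
have s0val : complex.Re (\tr (s0 *m s0)) = \sum_i clamp x y (r i) ^+ 2.
  by rewrite uc_tr_diag //=; apply: eq_bigr => i _; rewrite expr2.
have lb : forall z, tr2_set eps rho z -> \sum_i clamp x y (r i) ^+ 2 <= z.
  move=> z [s [hs hd] <-].
  have := lower UP Erho hrho hs hd xy Hid.
  by rewrite lecE => /andP[_].
have mem : tr2_set eps rho (\sum_i clamp x y (r i) ^+ 2) by exists s0.
have infE : inf (tr2_set eps rho) = \sum_i clamp x y (r i) ^+ 2.
  apply/le_anti/andP; split.
    by apply: ge_inf => //; exists (\sum_i clamp x y (r i) ^+ 2).
  by apply: lb_le_inf => //; exists (\sum_i clamp x y (r i) ^+ 2).
by rewrite /S2eps infE sumT.
Qed.
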